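(* Let $N\in\mathbb N$, $\nu>0$, and let $z_1^{(\nu-1)}>\dots>z_N^{(\nu-1)}>0$ be the zeros of the Laguerre polynomial $L_N^{(\nu-1)}$ (orthogonal with respect to $e^{-x}x^{\nu-1}$ on $]0,\infty[$). Let $r_i:=\sqrt{2z_i^{(\nu-1)}}$ and form $S=(s_{i,j})_{i,j=1,\dots,N}$ with $$s_{i,i}:=1+\frac{2\nu}{r_i^2}+2\sum_{l\ne i}(r_i-r_l)^{-2}+2\sum_{l\ne i}(r_i+r_l)^{-2},\qquad s_{i,j}:=2(r_i+r_j)^{-2}-2(r_i-r_j)^{-2}\ (i\ne j).$$ Then $\det S=N!\cdot 2^N$. *)

(* Defs.v *)
From mathcomp Require Import all_boot all_order all_algebra.
From mathcomp Require Import reals.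
Set Implicit Arguments. Unset Strict Implicit. Unset Printing Implicit Defensive.
Import Order.TTheory GRing.Theory Num.Theory.
Local Open Scope ring_scope.

(* Generalized Laguerre polynomial L_N^{(a)}(x)
   = sum_{k=0}^N (-1)^k binom(N+a, N-k) x^k / k!
   where binom(N+a, N-k) / k! = (prod_{j=k+1}^{N} (a + j)) / ((N-k)! k!). *)
Definition laguerre (R : fieldType) (a : R) (N : nat) : {poly R} :=
  \poly_(k < N.+1)
    ((-1) ^+ k / ((k`!)%:R * ((N - k)`!)%:R) *
     \prod_(k.+1 <= j < N.+1) (a + j%:R)).

Definition Smat (R : realType) (N : nat) (nu : R) (r : 'I_N -> R) : 'M[R]_N :=
  \matrix_(i, j)
    (if i == j then
       1 + 2 * nu / (r i ^+ 2)
         + 2 * \sum_(l < N | l != i) (r i - r l) ^- 2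
         + 2 * \sum_(l < N | l != i) (r i + r l) ^- 2
     else 2 * (r i + r j) ^- 2 - 2 * (r i - r j) ^- 2).

(* Main.v *)
Require Import Defs.
From mathcomp Require Import all_boot all_order all_algebra.
From mathcomp Require Import reals.
From mathcomp Require Import ring lra zify.
Set Implicit Arguments. Unset Strict Implicit. Unset Printing Implicit Defensive.
Import Order.TTheory GRing.Theory Num.Theory.
Local Open Scope ring_scope.

Section P.
Variable R : realType.
Definition Lop (nu : R) (N : nat) (f : {poly R}) : {poly R} :=
  'X * f^`()^`() + (nu%:P - 'X) * f^`() + (N%:R)%:P * f.

Lemma Lop_mulXsubC nu N c Q : Lop nu N (('X - c%:P) * Q) =
  ('X - c%:P) * Lop nu N Q + ('X *+ 2) * Q^`() + (nu%:P - 'X) * Q.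
Proof.
rewrite /Lop !derivE.
ring.
Qed.

Lemma LopE nu N f x : (Lop nu N f).[x] = x * f^`()^`().[x] + (nu - x) * f^`().[x] + N%:R * f.[x].
Proof. by rewrite /Lop !hornerE. Qed.

Lemma prod_deriv (I : Type) (r : seq I) (P : pred I) (a : I -> R) x :
  (forall i, P i -> x - a i != 0) ->
  let Q := \prod_(i <- r | P i) ('X - (a i)%:P) in
  [/\ Q.[x] != 0,
   Q^`().[x] = Q.[x] * \sum_(i <- r | P i) (x - a i)^-1 &
   Q^`()^`().[x] = Q.[x] * ((\sum_(i <- r | P i) (x - a i)^-1)^+2 - \sum_(i <- r | P i) (x - a i)^-2)].
Proof.
move=> Ha; elim: r => [|i r IH] /=.
  by rewrite !big_nil derivC !hornerE deriv0 horner0 oner_neq0 expr2 mulr0 subr0.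
rewrite !big_cons; case: ifP => Pi //.
case: IH => [H0 H1 H2].
set Q0 := \prod_(_ <- _ | _) _ in H0 H1 H2 *.
set S1 := \sum_(_ <- _ | _) _ in H1 H2 *.
set S2 := \sum_(_ <- _ | _) _ in H2 *.
have hx := Ha i Pi.
rewrite !derivE !hornerE H1 H2.
split.
- by rewrite mulf_neq0.
- field; exact: hx.
- move: hx; set u := (x - a i); move=> hx; rewrite /=; field; exact: hx.
Qed.

Lemma coef_Lop nu N f k : (Lop nu N f)`_k =
  f`_k.+1 * ((k.+1)%:R * (k%:R + nu)) + f`_k * (N%:R - k%:R).
Proof.
rewrite /Lop mulrBl !coefD coefN !coefXM !coefCM !coef_deriv.
case: k => [|k] /=; first by rewrite mulr1n; ring.
ring. Qed.

Lemma natf_neq0 n : (n.+1)%:R != 0 :> R.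
Proof. by rewrite pnatr_eq0. Qed.
Lemma fact_neq0 n : (n`!)%:R != 0 :> R.
Proof. by rewrite pnatr_eq0 -lt0n fact_gt0. Qed.

Lemma laguerre_ode nu N : Lop nu N (laguerre (nu - 1) N) = 0.
Proof.
apply/polyP => k; rewrite coef_Lop coef0 !coef_poly.
case: (ltnP k N) => hk.
  have [m eN] : exists m, N = (k + m).+1 by exists (N - k.+1)%N; lia.
  rewrite eN; have -> : (k.+1 < (k + m).+2)%N by lia. have -> : (k < (k + m).+2)%N by lia.
  have -> : ((k + m).+1 - k = m.+1)%N by lia.
  have -> : ((k + m).+1 - k.+1 = m)%N by lia.
  rewrite (big_ltn (m := k.+1)) ?ltnS ?leq_addr //.
  rewrite !factS !natrM -!natr1 natrD exprS.
  set P := \prod_(_ <= _ < _) _.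
  have h1 := natf_neq0 k. have h2 := natf_neq0 m.
  have h3 := fact_neq0 k. have h4 := fact_neq0 m.
  rewrite -!natr1 in h1 h2. field.
  by rewrite h1 h2 h3 h4.
have -> : (k.+1 < N.+1)%N = false by lia. rewrite mul0r add0r.
case: (ltnP k N.+1) => h; last by rewrite mul0r.
have -> : k = N by lia.
by rewrite subrr mulr0.
Qed.


Lemma size_index_enum_ord (N : nat) : size (index_enum 'I_N) = N.
Proof. by rewrite [index_enum _]unlock -enumT size_enum_ord. Qed.

Lemma Lop_lin nu N a f g : Lop nu N (a *: f + g) = a *: Lop nu N f + Lop nu N g.
Proof. rewrite /Lop !derivE -!mul_polyC. ring. Qed.

Lemma Lop_C nu N c f : Lop nu N (c%:P * f) = c%:P * Lop nu N f.
Proof. rewrite /Lop !derivE. ring. Qed.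

Lemma size_Lop nu N (f : {poly R}) n : (size f <= n)%N -> (size (Lop nu N f) <= n)%N.
Proof.
move=> hf; apply/leq_sizeP => j hj.
by rewrite coef_Lop !nth_default ?mul0r ?addr0 //; apply: leq_trans hf _ => //; apply: leqW.
Qed.

Lemma Lop0 nu N : Lop nu N 0 = 0.
Proof. by rewrite /Lop !deriv0 !mulr0 !addr0. Qed.

Lemma Lop_sumZ nu N (I : Type) (r : seq I) (c : I -> R) (g : I -> {poly R}) :
  Lop nu N (\sum_(j <- r) c j *: g j) = \sum_(j <- r) c j *: Lop nu N (g j).
Proof.
elim: r => [|a r IH]; first by rewrite !big_nil Lop0.
by rewrite !big_cons Lop_lin IH.
Qed.

Lemma prod_fact n : \prod_(k < n) (n%:R - k%:R) = n`!%:R :> R.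
Proof.
elim: n => [|n IH]; first by rewrite big_ord0.
rewrite big_ord_recl /= subr0 factS natrM -IH; congr (_ * _).
by apply: eq_bigr => k _; rewrite /bump /= add1n -!natr1; ring.
Qed.

Lemma term_diag (a b yy w : R) : 0 < a -> 0 < b -> a ^+ 2 = 2 * yy -> b ^+ 2 = 2 * w ->
  yy != w ->
  2 * (a - b) ^- 2 + 2 * (a + b) ^- 2 = 4 * yy * (yy - w) ^- 2 - 2 * (yy - w)^-1.
Proof.
move=> ha hb ea eb hyw.
have hab : a - b != 0.
  rewrite subr_eq0; apply: contra hyw => /eqP e.
  have h2 : 2 * yy = 2 * w by rewrite -ea -eb e.
  by apply/eqP; move: h2; apply: mulfI; rewrite pnatr_eq0.
have hab2 : a + b != 0 by rewrite gt_eqF // addr_gt0.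
have -> : yy = a ^+ 2 / 2 by rewrite ea; field.
have -> : w = b ^+ 2 / 2 by rewrite eb; field.
have h2 : a ^+ 2 / 2 - b ^+ 2 / 2 = (a - b) * (a + b) / 2 by field.
rewrite h2; field.
by rewrite hab hab2.
Qed.

Lemma term_off (a b yy w : R) : 0 < a -> 0 < b -> a ^+ 2 = 2 * yy -> b ^+ 2 = 2 * w ->
  yy != w ->
  a * (2 * (a + b) ^- 2 - 2 * (a - b) ^- 2) = 2 * (- (2 * yy) / (yy - w) ^+ 2) * b.
Proof.
move=> ha hb ea eb hyw.
have hab : a - b != 0.
  rewrite subr_eq0; apply: contra hyw => /eqP e.
  have h2 : 2 * yy = 2 * w by rewrite -ea -eb e.
  by apply/eqP; move: h2; apply: mulfI; rewrite pnatr_eq0.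
have hab2 : a + b != 0 by rewrite gt_eqF // addr_gt0.
have -> : yy = a ^+ 2 / 2 by rewrite ea; field.
have -> : w = b ^+ 2 / 2 by rewrite eb; field.
have h2 : a ^+ 2 / 2 - b ^+ 2 / 2 = (a - b) * (a + b) / 2 by field.
rewrite h2; field.
by rewrite hab hab2.
Qed.

Section Main.
Variables (N : nat) (nu : R) (y : 'I_N -> R).
Hypothesis yinj : injective y.
Hypothesis ypos : forall i, 0 < y i.
Hypothesis yroot : forall i, root (laguerre (nu - 1) N) (y i).

Let P := \prod_(l < N) ('X - (y l)%:P).
Let Q j := \prod_(l < N | l != j) ('X - (y l)%:P).

Lemma yneq i l : l != i -> y i - y l != 0.
Proof. by move=> h; rewrite subr_eq0; apply: contra h => /eqP/yinj ->. Qed.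

Lemma size_P : size P = N.+1.
Proof. by rewrite /P size_prod_XsubC size_index_enum_ord. Qed.

Lemma lag_eq : exists2 c, c != 0 & laguerre (nu - 1) N = c%:P * P.
Proof.
have H1 : all (root (laguerre (nu - 1) N)) (map y (index_enum 'I_N)).
  by apply/allP => x /mapP [i _ ->].
have H2 : uniq_roots (map y (index_enum 'I_N)).
  by rewrite uniq_rootsE map_inj_uniq // index_enum_uniq.
have [q Hq] := uniq_roots_prod_XsubC H1 H2.
rewrite big_map in Hq.
have hs : size (laguerre (nu - 1) N) = N.+1.
  rewrite size_poly_eq //= subnn big_geq // mulr1 mulf_neq0 //.
    by rewrite expf_neq0 // oppr_eq0 oner_neq0.
  by rewrite invr_neq0 // mulf_neq0 // fact_neq0.
have : size q == 1%N.
  have hs2 := hs; move: hs; rewrite Hq size_Mmonic ?size_P.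
  - by rewrite addnS /= => h; rewrite -(eqn_add2r N) h add1n.
  - by apply/eqP => q0; move: hs2; rewrite Hq q0 mul0r size_poly0.
  - exact: monic_prod_XsubC.
case/size_poly1P => c c0 qc; exists c => //; by rewrite Hq qc.
Qed.

Lemma LopP : Lop nu N P = 0.
Proof.
have [c c0 hc] := lag_eq.
have := laguerre_ode nu N; rewrite hc Lop_C => /eqP; rewrite mulf_eq0 polyC_eq0 (negPf c0) /=.
by move/eqP.
Qed.

Lemma PQ j : P = ('X - (y j)%:P) * Q j.
Proof. by rewrite /P (bigD1 j). Qed.

Lemma Q_root i j : i != j -> (Q j).[y i] = 0.
Proof. by move=> h; rewrite /Q (bigD1 i) //= hornerM hornerXsubC subrr mul0r. Qed.

Let s i := \sum_(l < N | l != i) (y i - y l)^-1.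
Let sig i := \sum_(l < N | l != i) (y i - y l)^-2.

Lemma Qd i : [/\ (Q i).[y i] != 0, (Q i)^`().[y i] = (Q i).[y i] * s i &
   (Q i)^`()^`().[y i] = (Q i).[y i] * (s i ^+ 2 - sig i)].
Proof.
have H : forall l : 'I_N, l != i -> y i - y l != 0 by move=> l; apply: yneq.
exact: (prod_deriv (index_enum 'I_N) H).
Qed.

Lemma EQ j : ('X - (y j)%:P) * Lop nu N (Q j) + ('X *+ 2) * (Q j)^`() + (nu%:P - 'X) * Q j = 0.
Proof. by rewrite -Lop_mulXsubC -PQ LopP. Qed.

Lemma dP i j : P^`().[y i] = (Q j).[y i] + (y i - y j) * (Q j)^`().[y i].
Proof. by rewrite (PQ j) derivM derivXsubC !hornerE. Qed.

Lemma offdiag i j : i != j ->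
  (Lop nu N (Q j)).[y i] = - (2 * y i * (Q i).[y i]) / (y i - y j) ^+ 2.
Proof.
move=> hij.
have e := congr1 (horner^~ (y i)) (EQ j).
rewrite /= !hornerE Q_root // in e.
have h1 := dP i i; have h2 := dP i j.
rewrite subrr mul0r addr0 in h1; rewrite Q_root // add0r h1 in h2.
have hd : y i - y j != 0 by apply: yneq; rewrite eq_sym.

rewrite !mulr0 !addr0 in e.
rewrite LopE (Q_root hij) mulr0 addr0 h2.
apply: (mulfI hd); move/eqP: e; rewrite addr_eq0 => /eqP ->.
by field.
Qed.

Lemma stieltjes i : 2 * y i * s i = y i - nu.
Proof.
have [q0 d1 d2] := Qd i.
have e := congr1 (horner^~ (y i)) (EQ i).
rewrite /= !hornerE subrr mul0r add0r d1 in e.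
have : (Q i).[y i] * (2 * y i * s i - (y i - nu)) = 0 by rewrite -e; ring.
by move/eqP; rewrite mulf_eq0 (negPf q0) /= subr_eq0 => /eqP.
Qed.

Lemma diag i : (Lop nu N (Q i)).[y i] = (Q i).[y i] * (nu / y i + 2 * y i * sig i).
Proof.
have [q0 d1 d2] := Qd i.
have e := congr1 (fun p => p^`().[y i]) (EQ i).
rewrite /= deriv0 horner0 in e.
rewrite !derivE /= !hornerE subrr !mul0r !addr0 d1 d2 in e.
rewrite LopE d1 d2 -[LHS]subr0 -[X in _ - X = _]e.
have hy : y i != 0 by rewrite gt_eqF ?ypos.
have hnu : nu = y i - 2 * y i * s i by rewrite stieltjes; ring.
rewrite hnu /=; field; exact: hy.
Qed.

Lemma size_Q j : (size (Q j) <= N)%N.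
Proof.
have [q0 _ _] := Qd j.
have Q0 : Q j != 0 by apply: contra q0 => /eqP ->; rewrite horner0.
have := size_P; rewrite (PQ j) size_mul ?polyXsubC_eq0 // size_XsubC add2n /=.
by case=> ->.
Qed.

Lemma interp (f : {poly R}) : (size f <= N)%N ->
  f = \sum_(j < N) (f.[y j] / (Q j).[y j]) *: Q j.
Proof.
move=> hf; apply/eqP; rewrite -subr_eq0; apply/eqP.
apply: (@roots_geq_poly_eq0 _ _ (map y (index_enum 'I_N))).
- apply/allP => x /mapP [i _ ->].
  rewrite rootE hornerD hornerN horner_sum (bigD1 i) //= big1 => [|j hj]; last first.
    have hij : i != j by rewrite eq_sym.
    by rewrite hornerZ (Q_root hij) mulr0.
  have [q0 _ _] := Qd i.
  by rewrite hornerZ addr0 divfK ?subrr.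
- by rewrite map_inj_uniq // index_enum_uniq.
- rewrite size_map size_index_enum_ord; apply/leq_sizeP => m hm.
  rewrite coefB coef_sum big1 => [|j _]; last first.
    by rewrite coefZ nth_default ?mulr0 // (leq_trans (size_Q j)).
  by rewrite nth_default ?subr0 // (leq_trans hf).
Qed.

Let A : 'M[R]_N := \matrix_(i, j) ((Lop nu N (Q j)).[y i] / (Q j).[y j]).

Lemma nodal (f : {poly R}) i : (size f <= N)%N ->
  (Lop nu N f).[y i] = \sum_j A i j * f.[y j].
Proof.
move=> hf; rewrite {1}(interp hf) Lop_sumZ horner_sum.
apply: eq_bigr => j _; rewrite hornerZ mxE; field.
by case: (Qd j).
Qed.

Let V : 'M[R]_N := \matrix_(i, k) (y i ^+ k).
Let B : 'M[R]_N := \matrix_(m, k) (Lop nu N 'X^k)`_m.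

Lemma AV : A *m V = V *m B.
Proof.
apply/matrixP => i k; rewrite !mxE.
under eq_bigr do rewrite [V _ _]mxE.
under [RHS]eq_bigr do rewrite !mxE.
have hk : (size ('X^k : {poly R}) <= N)%N by rewrite size_polyXn.
under eq_bigr do rewrite -(hornerXn (y _) k).
rewrite -nodal // (horner_coef_wide _ (size_Lop nu N hk)).
by apply: eq_bigr => m _; rewrite mulrC.
Qed.

Lemma detB : \det B = N`!%:R.
Proof.
rewrite -det_tr det_trig.
  rewrite -prod_fact; apply: eq_bigr => k _.
  by rewrite !mxE coef_Lop !coefXn eqxx eqn_leq ltnn /= mul0r add0r mul1r.
apply/is_trig_mxP => k m hkm; rewrite !mxE coef_Lop !coefXn.
have -> : (m.+1 == k) = false by apply/negbTE/eqP; lia.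
have -> : (m == k :> nat) = false by apply/negbTE/eqP; lia.
by rewrite !mul0r addr0.
Qed.

Lemma detV : \det V != 0.
Proof.
have -> : V = (Vandermonde N (\row_i y i))^T by apply/matrixP => i k; rewrite !mxE.
rewrite det_tr det_Vandermonde.
apply/prodf_neq0 => i _; apply/prodf_neq0 => j hij; rewrite !mxE subr_eq0.
by apply: contraTneq hij => /yinj ->; rewrite ltnn.
Qed.

Lemma detA : \det A = N`!%:R.
Proof.
have := congr1 determinant AV; rewrite !det_mulmx detB mulrC => h.
by apply: (mulfI detV).
Qed.

Let r i := Num.sqrt (2 * y i).

Lemma r_pos i : 0 < r i.
Proof. by rewrite sqrtr_gt0 mulr_gt0 ?ypos. Qed.

Lemma r_sq i : r i ^+ 2 = 2 * y i.
Proof. by rewrite sqr_sqrtr // ltW // mulr_gt0 ?ypos. Qed.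

Let D : 'M[R]_N := diag_mx (\row_i (r i * (Q i).[y i])).

Lemma yneq' i j : i != j -> y i != y j.
Proof. by move=> h; apply: contra h => /eqP /yinj ->. Qed.

Lemma DS : D *m Smat nu r = (2 *: A) *m D.
Proof.
apply/matrixP => i j; rewrite mul_diag_mx mul_mx_diag !mxE.
case: (eqVneq i j) => [<-|hij].
  rewrite diag.
  have [q0 _ _] := Qd i.
  have hsum : 2 * \sum_(l < N | l != i) (r i - r l) ^- 2 + 2 * \sum_(l < N | l != i) (r i + r l) ^- 2
      = 4 * y i * sig i - 2 * s i.
    rewrite !mulr_sumr -big_split /= /sig /s -sumrB.
    apply: eq_bigr => l hl; apply: term_diag; rewrite ?r_pos ?r_sq //.
    by apply: yneq'; rewrite eq_sym.
  rewrite -addrA hsum r_sq.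
  have hy : y i != 0 by rewrite gt_eqF ?ypos.
  have hnu : nu = y i - 2 * y i * s i by rewrite stieltjes; ring.
  rewrite hnu; field.
  by rewrite q0 hy.
rewrite (offdiag hij).
have [q0 _ _] := Qd i; have [q0' _ _] := Qd j.
have key := @term_off (r i) (r j) (y i) (y j) (r_pos i) (r_pos j) (r_sq i) (r_sq j) (yneq' hij).
have -> : 2 * (- (2 * y i * (Q i).[y i]) / (y i - y j) ^+ 2 / (Q j).[y j]) * (r j * (Q j).[y j])
    = (Q i).[y i] * (2 * (- (2 * y i) / (y i - y j) ^+ 2) * r j).
  by field; rewrite q0' andbT yneq // eq_sym.
rewrite -key; ring.
Qed.

Lemma detS : \det (Smat nu r) = 2 ^+ N * N`!%:R.
Proof.
have := congr1 determinant DS; rewrite !det_mulmx detZ detA => h.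
have hD : \det D != 0.
  rewrite det_diag; apply/prodf_neq0 => i _; rewrite mxE mulf_neq0 //.
    by rewrite gt_eqF ?r_pos.
  by case: (Qd i).
by apply: (mulIf hD); rewrite -h mulrC.
Qed.

End Main.
End P.

Unset Implicit Arguments.

Theorem corollary3p4 (R : realType) (N : nat) (nu : R) (z : 'I_N -> R) :
  0 < nu ->
  (forall i j : 'I_N, (i < j)%N -> z j < z i) ->
  (forall i, 0 < z i) ->
  (forall i, root (laguerre (nu - 1) N) (z i)) ->
  \det (Smat nu (fun i => Num.sqrt (2 * z i))) = (N`!)%:R * 2 ^+ N.
Proof.
move=> hnu hdec hpos hroot.
have yinj : injective z.
  move=> i j e; case: (ltngtP i j) => h.
  - by have := hdec _ _ h; rewrite e ltxx.
  - by have := hdec _ _ h; rewrite e ltxx.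
  - exact: val_inj.
by rewrite (detS yinj hpos hroot) mulrC.
Qed.
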